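(* Let $M,M'\in\mathrm{Mat}(2,\mathbb{Z})$ have the same trace and the same determinant, and suppose $\mathrm{mgcd}(M')=\mathrm{mgcd}(M)=1$. Then the toral endomorphisms defined by $M$ and $M'$ have the same local statistics on all lattices $L_n$, $n\in\mathbb{N}$.
   Context: For $M=\begin{pmatrix}a&b\\c&d\end{pmatrix}$, $\mathrm{mgcd}(M)=\gcd(b,c,d-a)\ge0$. $L_n=\{(\frac{k}{n},\frac{\ell}{n}):0\le k,\ell<n\}\subset\mathbb{T}^2=\mathbb{R}^2/\mathbb{Z}^2$, with integer matrices acting by multiplication mod $1$. Two integer matrices have the same local statistics on $L_n$ if the directed pseudo-graphs on $L_n$ they induce (vertices the points of $L_n$, a directed edge from $x$ to $Mx$) are isomorphic as graphs. *)

(* Defs.v *)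
From HB Require Import structures.
From mathcomp Require Import all_boot all_order all_algebra.
Set Implicit Arguments. Unset Strict Implicit. Unset Printing Implicit Defensive.
Import Order.TTheory GRing.Theory Num.Theory.
Local Open Scope ring_scope.

Definition mgcd (M : 'M[int]_2) : int :=
  gcdz (gcdz (M 0 1) (M 1 0)) (M 1 1 - M 0 0).

(* The lattice L_n = {(k/n, l/n) : 0 <= k, l < n} is represented by
   'I_n * 'I_n, the pair (k, l) standing for the point (k/n, l/n). *)
Definition Lpt (n : nat) := ('I_n * 'I_n)%type.

(* Directed edge x -> M x (mod 1) on L_n: M (k/n, l/n) mod 1 is the point
   ((a k + b l mod n)/n, (c k + d l mod n)/n). *)
Definition toral_edge (M : 'M[int]_2) (n : nat) : rel (Lpt n) :=
  fun x y =>
    ((y.1 : nat)%:Z == modz (M 0 0 * (x.1 : nat)%:Z + M 0 1 * (x.2 : nat)%:Z) n%:Z)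
    && ((y.2 : nat)%:Z == modz (M 1 0 * (x.1 : nat)%:Z + M 1 1 * (x.2 : nat)%:Z) n%:Z).

(* Same local statistics on L_n: the induced directed pseudo-graphs are
   isomorphic, i.e. there is a bijection of vertices preserving and
   reflecting edges. *)
Definition same_local_stats (M M' : 'M[int]_2) (n : nat) : Prop :=
  exists f : Lpt n -> Lpt n,
    bijective f /\ forall x y, @toral_edge M n x y = @toral_edge M' n (f x) (f y).

(* Main.v *)
Require Import Defs.
From HB Require Import structures.
From mathcomp Require Import all_boot all_order all_algebra.
From mathcomp Require Import ring.
Import Order.TTheory GRing.Theory Num.Theory.

Set Implicit Arguments. Unset Strict Implicit.
Local Open Scope ring_scope.

Definition appR (R : comUnitRingType) (a b c d : R) (u : R * R) : R * R :=
  (a * u.1 + b * u.2, c * u.1 + d * u.2).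
Definition phiR (R : comUnitRingType) (x y x' y' : R) (u : R * R) : R * R :=
  (u.1 * x + u.2 * x', u.1 * y + u.2 * y').
Definition Cm (R : comUnitRingType) (T D : R) (u : R * R) : R * R :=
  (- D * u.2, u.1 + T * u.2).

Lemma app_phi (R : comUnitRingType) (a b c d x y : R) u :
  appR a b c d (phiR x y (a * x + b * y) (c * x + d * y) u)
  = phiR x y (a * x + b * y) (c * x + d * y) (Cm (a + d) (a * d - b * c) u).
Proof. by rewrite /appR /phiR /Cm /=; congr (_, _); ring. Qed.

Lemma phi_inj (R : comUnitRingType) (x y x' y' : R) :
  x * y' - y * x' \is a GRing.unit -> injective (phiR x y x' y').
Proof.
move=> hu [s t] [s' t'] /= [e1 e2].
have h1 : (s - s') * x + (t - t') * x' = 0.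
  by rewrite mulrBl mulrBl addrACA -opprD e1 subrr.
have h2 : (s - s') * y + (t - t') * y' = 0.
  by rewrite mulrBl mulrBl addrACA -opprD e2 subrr.
have hs : (s - s') * (x * y' - y * x') = 0 * (x * y' - y * x').
  have -> : (s - s') * (x * y' - y * x') = y' * ((s - s') * x + (t - t') * x')
      - x' * ((s - s') * y + (t - t') * y') by ring.
  by rewrite h1 h2; ring.
have ht : (t - t') * (x * y' - y * x') = 0 * (x * y' - y * x').
  have -> : (t - t') * (x * y' - y * x') = x * ((s - s') * y + (t - t') * y')
      - y * ((s - s') * x + (t - t') * x') by ring.
  by rewrite h1 h2; ring.
move/(mulIr hu)/subr0_eq: hs => ->.
by move/(mulIr hu)/subr0_eq: ht => ->.
Qed.


Lemma det2 (M : 'M[int]_2) : \det M = M 0 0 * M 1 1 - M 0 1 * M 1 0.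
Proof.
rewrite (expand_det_row _ 0) !big_ord_recl big_ord0 /cofactor !det_mx11 /=.
rewrite !mxE /=.
have E1 : lift (0 : 'I_2) (0 : 'I_1) = 1 by apply/val_inj.
have E2 : lift (ord0 : 'I_2) (0 : 'I_1) = 1 by apply/val_inj.
have E3 : lift (ord0 : 'I_2) (ord0 : 'I_1) = 1 by apply/val_inj.
have E5 : lift (1 : 'I_2) (0 : 'I_1) = 0 by apply/val_inj.
have E6 : (ord0 : 'I_2) = 0 by [].
rewrite ?E1 ?E2 ?E3 ?E5 ?E6 /= expr0 expr1; ring.
Qed.
Lemma tr2 (M : 'M[int]_2) : \tr M = M 0 0 + M 1 1.
Proof.
rewrite /mxtrace !big_ord_recl big_ord0 addr0.
have E3 : lift (ord0 : 'I_2) (ord0 : 'I_1) = 1 by apply/val_inj.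
by rewrite E3.
Qed.


Lemma intZp (n : nat) (z : int) : ((z %% (n.+2)%:Z)%Z)%:~R = z%:~R :> 'Z_(n.+2).
Proof.
rewrite [in RHS](divz_eq z n.+2) [in RHS]intrD [in RHS]intrM.
have -> : ((n.+2)%:Z)%:~R = 0 :> 'Z_(n.+2) by exact: (@pchar_Zp n.+2).
by rewrite mulr0 add0r.
Qed.

Lemma edgeZ (n : nat) (i : 'Z_(n.+2)) (z : int) :
  (Posz (i : nat) == (z %% (n.+2)%:Z)%Z) = (i == z%:~R).
Proof.
rewrite -intZp.
have hge : (0 <= z %% (n.+2)%:Z)%Z by rewrite modz_ge0.
have hlt : ((z %% (n.+2)%:Z)%Z < (n.+2)%:Z) by rewrite ltz_pmod.
move: hge hlt; case: (z %% _)%Z => // k _ hk.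
rewrite eqz_nat.
have -> : (k%:Z)%:~R = k%:R :> 'Z_(n.+2) by [].
rewrite ltz_nat in hk.
apply/eqP/eqP => [h|->]; first by apply/val_inj; rewrite /= val_Zp_nat // modn_small // h.
by rewrite val_Zp_nat // modn_small.
Qed.


Lemma dvd_prod_primes (q : nat) (P : pred nat) (s : seq nat) :
  prime q -> all prime s ->
  (q %| \prod_(p <- s | P p) p)%N = has (fun p => P p && (p == q)) s.
Proof.
move=> pq; elim: s => [|p s IH] /=; first by rewrite big_nil dvdn1; case: eqP pq => // ->.
case/andP=> pp ps; rewrite big_cons; case: (P p) => /=.
  by rewrite Euclid_dvdM // dvdn_prime2 // IH // eq_sym.
exact: IH.
Qed.

Lemma EuclidZ (p : nat) (u v : int) : prime p ->
  ((p : int) %| u * v)%Z = ((p : int) %| u)%Z || ((p : int) %| v)%Z.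
Proof. by move=> pp; rewrite !dvdzE abszM Euclid_dvdM. Qed.

Lemma prim (a b c d : int) (n : nat) : (0 < n)%N -> gcdz (gcdz b c) (d - a) = 1 ->
  exists x y : int, coprimez (x * (c * x + d * y) - y * (a * x + b * y)) n.
Proof.
move=> n0 hg.
set P1 := (\prod_(p <- primes n | ~~ (p %| `|c|)%N) p)%N.
set P2 := (\prod_(p <- primes n | (p %| `|c|)%N && ~~ (p %| `|b|)%N) p)%N.
exists (P2 : int), (P1 : int).
set x := (P2 : int); set y := (P1 : int).
set Q := (x * (c * x + d * y) - y * (a * x + b * y)).
rewrite coprimezE /=.
apply/eqP; apply/eqP; apply: contraT => hne.
have g0 : (0 < gcdn `|Q| n)%N by rewrite gcdn_gt0 n0 orbT.
have g1 : (1 < gcdn `|Q| n)%N by case: (gcdn _ _) g0 hne => [|[|k]].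
set p := pdiv (gcdn `|Q| n).
have pp : prime p by exact: pdiv_prime.
have pg : (p %| gcdn `|Q| n)%N by exact: pdiv_dvd.
rewrite dvdn_gcd in pg; case/andP: pg => pQ pn.
have pin : p \in primes n by rewrite mem_primes pp n0.
have allp : all prime (primes n) by apply/allP => r; rewrite mem_primes => /andP[].
have pQz : ((p : int) %| Q)%Z by rewrite dvdzE.
have hx : ((p : int) %| x)%Z = ((p %| `|c|)%N && ~~ (p %| `|b|)%N).
  rewrite dvdzE /= /x /P2 dvd_prod_primes //.
  apply/hasP/idP => [[r rin /andP[hr /eqP <-]] //| h]; by exists p; rewrite ?h ?eqxx.
have hy : ((p : int) %| y)%Z = ~~ (p %| `|c|)%N.
  rewrite dvdzE /= /y /P1 dvd_prod_primes //.
  apply/hasP/idP => [[r rin /andP[hr /eqP <-]] //| h]; by exists p; rewrite ?h ?eqxx.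
have hcz : ((p : int) %| c)%Z = (p %| `|c|)%N by rewrite dvdzE.
have hbz : ((p : int) %| b)%Z = (p %| `|b|)%N by rewrite dvdzE.
case hc: (p %| `|c|)%N; rewrite hc in hx hy hcz.
- case hb: (p %| `|b|)%N; rewrite hb in hx hbz.
  +
    have he : ~~ ((p : int) %| d - a)%Z.
      apply/negP => he.
      have : ((p : int) %| gcdz (gcdz b c) (d - a))%Z by rewrite !dvdz_gcd hbz hcz he.
      by rewrite hg dvdz1 /=; case: eqP pp => // ->.
    have h1 : ((p : int) %| c * x * x - b * y * y)%Z.
      by apply: rpredB; rewrite -!mulrA; apply: dvdz_mulr.
    have : ((p : int) %| (d - a) * x * y)%Z.
      have -> : (d - a) * x * y = Q - (c * x * x - b * y * y) by rewrite /Q; ring.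
      exact: rpredB.
    by rewrite !EuclidZ // (negbTE he) hx hy.
  + have h1 : ((p : int) %| x * (c * x + (d - a) * y))%Z by apply: dvdz_mulr; rewrite hx.
    have : ((p : int) %| b * y * y)%Z.
      have -> : b * y * y = x * (c * x + (d - a) * y) - Q by rewrite /Q; ring.
      exact: rpredB.
    by rewrite !EuclidZ // hbz hy.
- have h1 : ((p : int) %| y * ((d - a) * x - b * y))%Z by apply: dvdz_mulr; rewrite hy.
  have : ((p : int) %| c * x * x)%Z.
    have -> : c * x * x = Q - y * ((d - a) * x - b * y) by rewrite /Q; ring.
    exact: rpredB.
  by rewrite !EuclidZ // hcz hx.
Qed.

Lemma unitZ (n : nat) (z : int) : coprimez z (n.+2)%:Z ->
  (z%:~R : 'Z_(n.+2)) \is a GRing.unit.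
Proof.
rewrite coprimezE /= coprime_sym => h.
case: z h => k h.
  by rewrite -pmulrn unitZpE.
by rewrite NegzE intrN unitrN -pmulrn unitZpE.
Qed.

Lemma edge_app (M : 'M[int]_2) (n : nat) (u w : Lpt n.+2) :
  toral_edge M u w =
  ((w : 'Z_(n.+2) * 'Z_(n.+2)) == appR ((M 0 0)%:~R) ((M 0 1)%:~R) ((M 1 0)%:~R) ((M 1 1)%:~R)
      (u : 'Z_(n.+2) * 'Z_(n.+2))).
Proof.
rewrite /toral_edge /appR !edgeZ !intrD !intrM -!pmulrn !natr_Zp.
by case: w.
Qed.

Theorem corollary35 (M M' : 'M[int]_2) :
  \tr M = \tr M' -> \det M = \det M' ->
  mgcd M' = 1 -> mgcd M = 1 ->
  forall n : nat, same_local_stats M M' n.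
Proof.
move=> htr hdet hg' hg [|[|n]].
- exists id; split; first by exists id.
  by move=> [[m hm] j] y; exfalso; move: hm; rewrite ltn0.
- exists id; split; first by exists id.
  by move=> x y; rewrite /toral_edge !modz1.
have [x [y hxy]] := prim (isT : (0 < n.+2)%N) hg.
have [x' [y' hxy']] := prim (isT : (0 < n.+2)%N) hg'.
pose R := 'Z_(n.+2).
pose A : R := (M 0 0)%:~R. pose B : R := (M 0 1)%:~R.
pose C : R := (M 1 0)%:~R. pose D : R := (M 1 1)%:~R.
pose A' : R := (M' 0 0)%:~R. pose B' : R := (M' 1 1)%:~R.
pose B'' : R := (M' 0 1)%:~R. pose C' : R := (M' 1 0)%:~R.
pose X : R := x%:~R. pose Y : R := y%:~R.
pose X' : R := x'%:~R. pose Y' : R := y'%:~R.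
pose phi := phiR X Y (A * X + B * Y) (C * X + D * Y).
pose phi' := phiR X' Y' (A' * X' + B'' * Y') (C' * X' + B' * Y').
have inj1 : injective phi.
  apply: phi_inj.
  have -> : X * (C * X + D * Y) - Y * (A * X + B * Y)
    = (x * (M 1 0 * x + M 1 1 * y) - y * (M 0 0 * x + M 0 1 * y))%:~R.
    by rewrite /X /Y /A /B /C /D !(intrB, intrD, intrM).
  exact: unitZ.
have inj2 : injective phi'.
  apply: phi_inj.
  have -> : X' * (C' * X' + B' * Y') - Y' * (A' * X' + B'' * Y')
    = (x' * (M' 1 0 * x' + M' 1 1 * y') - y' * (M' 0 0 * x' + M' 0 1 * y'))%:~R.
    by rewrite /X' /Y' /A' /B' /B'' /C' !(intrB, intrD, intrM).
  exact: unitZ.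
have [g Kg gK] := injF_bij inj1.
have b2 := injF_bij inj2.
have eT : A + D = A' + B'.
  by rewrite /A /D /A' /B' -!intrD -!tr2 htr.
have eD : A * D - B * C = A' * B' - B'' * C'.
  by rewrite /A /D /A' /B' /B /C /B'' /C' -!intrM -!intrB -!det2 hdet.
have key : forall u w : R * R, (w == appR A B C D u) = (g w == Cm (A + D) (A * D - B * C) (g u)).
  move=> u w; rewrite -{1}(gK w) -{1}(gK u) app_phi.
  exact: (inj_eq inj1).
exists (fun u => phi' (g u)); split.
  apply: (bij_comp b2); by exists phi.
move=> u w; rewrite !edge_app.
rewrite key app_phi (inj_eq inj2) eT eD.
by [].
Qed.
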